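(* Assume the standing setting below, fix a planar drawing of $H$ realizing $\pi$, and let $\widetilde P,\overline P$ be two distinct paths among $P_1,\dots,P_\ell$ that share a vertex $v\in V\setminus\{s\}$. Consider the tri-coloring of $H$ induced by $\widetilde P,\overline P$ and $v$. Then every path $P\in\{P_1,\dots,P_\ell\}$ changes its color at no vertex other than $v$; in particular it changes its color at most once.
   Context: Standing setting: $G=(V,A)$ is an acyclic planar directed graph (parallel arcs allowed), $s\in V$, $(H=(V,F),\pi,\phi)$ is an arc-split of $G$, and $P_1,\dots,P_\ell$ is a source-numbered nice $s$-path partitioning of $H$ in which every path has at least one arc and the last vertex of every $P_i$ has no outgoing arc in $H$. Definitions: paths are identified with their arc sets; $\delta^+(v),\delta^-(v)$ are the arcs leaving/entering $v$, $\delta(v)=\delta^+(v)\cup\delta^-(v)$. A combinatorial embedding is a family $\pi=(\pi_v)_{v\in V}$ of cyclic orderings of $\delta(v)$; it is planar if induced by a planar drawing (arcs around $v$ in counterclockwise order). For distinct $b_1,\dots,b_k\in\delta(v)$, listing $\delta(v)=\{a_1,\dots,a_m\}$ with $a_1=b_1$ and $a_{i+1}$ the successor of $a_i$ in $\pi_v$, $(b_1,\dots,b_k)$ is a $\pi_v$-progression if it is a subsequence of $a_1,\dots,a_m$. Two arc-disjoint paths $P,P'$ are crossing if they share a vertex $u$ internal to both such that, with $a,b$ the arcs of $P$ entering/leaving $u$ and $a',b'$ those of $P'$, $(a,a',b,b')$ or $(a',a,b',b)$ is a $\pi_u$-progression. An arc-split of $G$ is $(H,\pi,\phi)$ with $H=(V,F)$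 a directed graph, $\pi$ a planar combinatorial embedding of $H$, $\phi:F\to A$ preserving heads and tails, and each $\phi^{-1}(a)$ consecutive in $\pi_{\mathrm{head}(a)}$ and $\pi_{\mathrm{tail}(a)}$. An $s$-path partitioning of $H$ is a family of paths $P_1,\dots,P_\ell$ starting at $s$ with $F=P_1\dot\cup\cdots\dot\cup P_\ell$; nice means pairwise non-crossing; source-numbered means the first arcs $(a_1,\dots,a_\ell)$ form a $\pi_s$-progression. Tri-coloring: let $C$ be the plane subgraph formed by the union of the $s$-$v$ subpaths of $\widetilde P$ and $\overline P$ (orientations ignored). Every vertex has even degree in $C$, so the faces of $C$ (components of the plane minus the drawing of $C$) can be colored red and blue so that any two faces whose boundaries share an arc of $C$ get different colors (unique up to swapping colors). Each arc of $H$ not in $C$ gets the color of the face containing it; arcs of $C$ are colored black. A path changes color at a vertex $u$ if the arc of the path entering $u$ and the arc of the path leaving $u$ have different colors (among red, blue, black). *)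

(* Defs.v *)
From mathcomp Require Import all_boot fingroup perm.
Set Implicit Arguments. Unset Strict Implicit. Unset Printing Implicit Defensive.

(* Since all graphs considered are loopless
   (acyclic), the arcs of delta(v) are in bijection with the darts at v,
   where a dart is (e, true) = e seen from its tail, (e, false) = e seen
   from its head. *)
Definition dvert (V E : finType) (tl hd : E -> V) (d : E * bool) : V :=
  if d.2 then tl d.1 else hd d.1.

Definition acyclic (V E : finType) (tl hd : E -> V) : Prop :=
  forall (e : E) (p : seq E),
    path (fun x y => hd x == tl y) e p -> hd (last e p) != tl e.

(* A combinatorial embedding: sg is the (counterclockwise) successor
   permutation; at each vertex v it restricts to a single cyclic order of the
   darts at v (i.e. of delta(v)). *)
Definition rotation_system (V E : finType) (tl hd : E -> V)
    (sg : {perm E * bool}) : Prop :=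
  (forall d, dvert tl hd (sg d) = dvert tl hd d) /\
  (forall d d', dvert tl hd d = dvert tl hd d' -> fconnect sg d d').

(* Corners: the corner named by dart d at vertex dvert d is the angle
   between d and its successor sg d.  Face tracing permutation. *)
Definition facep (E : finType) (sg : {perm E * bool}) (d : E * bool) : E * bool :=
  (sg^-1)%g (d.1, ~~ d.2).

Definition adjV (V E : finType) (tl hd : E -> V) : rel V :=
  fun x y => [exists e, ((tl e == x) && (hd e == y)) || ((tl e == y) && (hd e == x))].

(* Planar combinatorial embedding: Euler's formula (genus 0 in every
   component): |V| - |E| + #faces = 2 #components, isolated vertices
   contributing one face each. *)
Definition planar_rot (V E : finType) (tl hd : E -> V) (sg : {perm E * bool}) : Prop :=
  rotation_system tl hd sg /\
  #|V| + fcard (facep sg) (@predT (E * bool))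
       + #|[pred x : V | [forall e, (tl e != x) && (hd e != x)]]|
  = 2 * n_comp (adjV tl hd) (@predT V) + #|E|.

Definition progression (E : finType) (sg : {perm E * bool}) (s : seq (E * bool)) : bool :=
  if s is d :: _ then subseq s (fingraph.orbit sg d) else true.

Definition consecutive_at (V E : finType) (tl hd : E -> V) (sg : {perm E * bool})
    (v : V) (S : pred E) : Prop :=
  exists (d : E * bool) (k : nat), forall e : E * bool,
    ((dvert tl hd e == v) && S e.1) = (e \in traject sg d k).

Definition arc_split (V E A : finType) (tlG hdG : A -> V) (tl hd : E -> V)
    (sg : {perm E * bool}) (phi : E -> A) : Prop :=
  planar_rot tl hd sg /\
  (forall f, tlG (phi f) = tl f /\ hdG (phi f) = hd f) /\
  (forall a : A, consecutive_at tl hd sg (hdG a) (fun f => phi f == a) /\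
                 consecutive_at tl hd sg (tlG a) (fun f => phi f == a)).

(* Paths are sequences of arcs; an s-path has at least one arc, starts at s
   and is a directed walk (hence a path, by acyclicity). *)
Definition is_spath (V E : finType) (tl hd : E -> V) (s : V) (p : seq E) : bool :=
  if p is e :: r then (tl e == s) && path (fun x y => hd x == tl y) e r else false.

(* (a, b) are consecutive arcs of p (so hd a is internal to p). *)
Definition consec (E : finType) (p : seq E) (a b : E) : bool :=
  (a, b) \in zip p (behead p).

Definition crossing (V E : finType) (tl hd : E -> V) (sg : {perm E * bool})
    (p q : seq E) : Prop :=
  exists a b a' b', [/\ consec p a b, consec q a' b', hd a = hd a' &
    progression sg [:: (a, false); (a', false); (b, true); (b', true)] \/
    progression sg [:: (a', false); (a, false); (b', true); (b, true)]].

Definition last_vertex (V E : finType) (hd : E -> V) (p : seq E) : option V :=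
  if p is e :: r then Some (hd (last e r)) else None.

Definition path_vertices (V E : finType) (hd : E -> V) (s : V) (p : seq E) : seq V :=
  s :: map hd p.

(* Standing setting: (P i)_{i < l} is a source-numbered nice s-path
   partitioning of H, each path nonempty and ending at a sink of H. *)
Definition standing_partition (V E : finType) (tl hd : E -> V)
    (sg : {perm E * bool}) (s : V) (l : nat) (P : 'I_l -> seq E) : Prop :=
  [/\ forall i, is_spath tl hd s (P i),
      forall f : E, \sum_(i < l) count_mem f (P i) = 1,
      forall i j, i != j -> ~ crossing tl hd sg (P i) (P j),
      progression sg [seq (a, true) | i <- enum 'I_l, a <- take 1 (P i)] &
      forall i x, last_vertex hd (P i) = Some x -> forall f, tl f != x].

Definition prefix_to (V E : finType) (hd : E -> V) (v : V) (p : seq E) : seq E :=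
  take (find (fun a => hd a == v) p).+1 p.

(* A side-coloring of the corners of H (red = true, blue = false) realizing
   the 2-coloring of the faces of C: corners on the same side of an arc are
   in the same face of C (same color); the two sides of an arc get different
   colors iff the arc belongs to C. *)
Definition corner_coloring (E : finType) (sg : {perm E * bool}) (inC : pred E)
    (col : E * bool -> bool) : Prop :=
  (forall d, col (facep sg d) = col d) /\
  (forall d, (col ((sg^-1)%g d) != col d) = inC d.1).

Inductive color := Red | Blue | Black.

Definition color_eqb (c1 c2 : color) : bool :=
  match c1, c2 with
  | Red, Red | Blue, Blue | Black, Black => true
  | _, _ => false
  end.

(* Color of an arc: black if in C, else the color of the face of C
   containing it (= color of either side). *)
Definition arc_color (E : finType) (inC : pred E) (col : E * bool -> bool) (f : E) : color :=
  if inC f then Black else if col (f, true) then Red else Blue.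

(* p changes color at the vertex hd a, where (a,b) consecutive arcs of p. *)
Definition changes_color (E : finType) (inC : pred E) (col : E * bool -> bool)
    (a b : E) : bool :=
  ~~ color_eqb (arc_color inC col a) (arc_color inC col b).

(* Main.v *)
Require Import Defs.
From mathcomp Require Import all_boot fingroup perm zify.
Set Implicit Arguments. Unset Strict Implicit. Unset Printing Implicit Defensive.

Section PathLemmas.
Variables (V E : finType) (tl hd : E -> V).
Let rl := fun x y => hd x == tl y.
Hypothesis acycH : forall e p, path rl e p -> hd (last e p) != tl e.

Lemma consec_cons2 (x y : E) r a b :
  consec (x :: y :: r) a b = ((a, b) == (x, y)) || consec (y :: r) a b.
Proof. by rewrite /consec /= inE. Qed.

Lemma consec1 (x a b : E) : consec [:: x] a b = false.
Proof. by []. Qed.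

Lemma consec_mem (p : seq E) a b : consec p a b -> a \in p /\ b \in p.
Proof.
elim: p => // x [|y r] IH //; rewrite consec_cons2 => /orP[/eqP[-> ->]|/IH[]].
  by rewrite !inE !eqxx orbT.
by move=> H1 H2; rewrite !inE in H1 H2 *; rewrite H1 H2 !orbT.
Qed.

Lemma noback (y : E) r a : path rl y r -> a \in y :: r -> hd a != tl y.
Proof.
move=> Hp; rewrite inE => /orP[/eqP->|ar]; first exact: (acycH (p:=[::])).
case/splitPr: ar Hp => r1 r2; rewrite cat_path => /andP[H1 /= /andP[H2 _]].
have := @acycH y (rcons r1 a); rewrite last_rcons; apply.
by rewrite -cats1 cat_path H1 /= H2.
Qed.

Lemma consec_link (e : E) r a b : path rl e r -> consec (e :: r) a b -> hd a = tl b.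
Proof.
elim: r e => // y r IH e /= /andP[He Hp]; rewrite consec_cons2 => /orP[/eqP[-> ->]|].
  exact/eqP.
exact: IH.
Qed.

Lemma consec_uniq (e : E) r a1 b1 a2 b2 : path rl e r ->
  consec (e :: r) a1 b1 -> consec (e :: r) a2 b2 -> hd a1 = hd a2 ->
  a1 = a2 /\ b1 = b2.
Proof.
elim: r e => // y r IH e /= /andP[He Hp]; rewrite !consec_cons2.
case/orP=> [/eqP[-> ->]|C1]; case/orP=> [/eqP[-> ->]|C2] //.
- move=> Eh; have [m2 _] := consec_mem C2.
  by have := noback Hp m2; rewrite -Eh (eqP He) eqxx.
- move=> Eh; have [m1 _] := consec_mem C1.
  by have := noback Hp m1; rewrite Eh (eqP He) eqxx.
- exact: IH Hp C1 C2.
Qed.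

Lemma consec_next (e : E) r f : f \in e :: r -> f != last e r ->
  exists b, consec (e :: r) f b.
Proof.
elim: r e => [|y r IH] e; first by rewrite inE => /eqP->; rewrite eqxx.
rewrite inE => /orP[/eqP->|fr] Hl; first by exists y; rewrite consec_cons2 eqxx.
have [b Hb] := IH y fr Hl; exists b; by rewrite consec_cons2 Hb orbT.
Qed.

Lemma consec_prev (e : E) r f : f \in e :: r -> f != e ->
  exists a, consec (e :: r) a f.
Proof.
elim: r e => [|y r IH] e; first by rewrite inE => /eqP->; rewrite eqxx.
rewrite inE => /orP[/eqP->|fr]; first by rewrite eqxx.
move=> _; have [->|fy] := eqVneq f y; first by exists e; rewrite consec_cons2 eqxx.
have [a Ha] := IH y fr fy; exists a; by rewrite consec_cons2 Ha orbT.
Qed.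

Lemma consec_take m (p : seq E) a b : consec (take m p) a b -> consec p a b.
Proof.
elim: p m => [|x p IH] [|m] //=; case: p IH => [|y r] IH; first by case: m.
case: m => [|m] //=; rewrite !consec_cons2 => /orP[->//|H].
by rewrite (IH m.+1 H) orbT.
Qed.

Lemma count_hd (e : E) r (v : V) : path rl e r ->
  count (fun ab : E * E => hd ab.1 == v) (zip (e :: r) r) <= 1.
Proof.
elim: r e => // y r IH e /= /andP[He Hp].
case: eqP => Hv; last exact: IH.
rewrite add1n ltnS leqn0 -/(zip (y :: r) r) eqn0Ngt -has_count.
apply/hasPn => -[a b] /= Hab; have [ma _] := @consec_mem (y :: r) a b Hab.
by have := noback Hp ma; rewrite -(eqP He) Hv => /negbTE->.
Qed.

End PathLemmas.

Lemma last_take_nth (T : Type) (x : T) s m : m < size s -> last x (take m.+1 s) = nth x s m.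
Proof.
elim: s x m => // y s IH x [|m] /=; first by case: (s) => //.
by move=> Hm; rewrite IH // (set_nth_default x).
Qed.

Lemma prefix_shape (V E : finType) (tl hd : E -> V) (v : V) (e : E) r :
  path (fun x y => hd x == tl y) e r -> v \in map hd (e :: r) ->
  exists r', [/\ prefix_to hd v (e :: r) = e :: r',
    path (fun x y => hd x == tl y) e r', hd (last e r') = v,
    (forall a b, consec (e :: r') a b -> consec (e :: r) a b) &
    {subset e :: r' <= e :: r}].
Proof.
move=> Hp Hv; rewrite /prefix_to /=.
have Hsub : forall r', r' = take (find (fun a => hd a == v) (e :: r)) r ->
   (forall a b, consec (e :: r') a b -> consec (e :: r) a b) /\ {subset e :: r' <= e :: r}.
  move=> r' ->; split; first by move=> a b H; apply: (@consec_take _ (find (fun a => hd a == v) (e :: r)).+1); rewrite /= -/(take _ r).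
  by move=> f; rewrite !inE => /orP[->//|/mem_take ->]; rewrite orbT.
case: ifP => He.
  exists [::]; have [H1 H2] := Hsub [::] ltac:(by rewrite /= He; case: (r)).
  by split => //; [case: (r) | apply/eqP].
have Hhas : has (fun a => hd a == v) r.
  move: Hv; rewrite /= inE => /orP[/eqP Hve|/mapP[f fr Hf]]; first by rewrite -Hve eqxx in He.
  by apply/hasP; exists f => //; rewrite Hf.
set r' := take _ r; exists r'.
have [H1 H2] := Hsub r' ltac:(by rewrite /= He); split => //.
- exact: take_path.
- by rewrite /r' last_take_nth ?(eqP (nth_find e Hhas)) // -has_find.
Qed.

Section ColorLemmas.
Variables (E : finType) (sg : {perm E * bool}) (inC : pred E) (col : E * bool -> bool).
Hypothesis Hcol : corner_coloring sg inC col.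

Lemma col_arc f : inC f = false -> col (f, false) = col (f, true).
Proof.
case: Hcol => H1 H2 Hf.
have := H1 (f, true); rewrite /facep /= => <-.
by have := H2 (f, false); rewrite /= Hf => /negbFE/eqP.
Qed.

Lemma col_iter x m :
  col (iter m sg x) = col x (+) odd (count (fun d => inC d.1) (traject sg (sg x) m)).
Proof.
elim: m => [|m IH]; first by rewrite /= addbF.
rewrite trajectSr -cats1 count_cat /= addn0 oddD -iterSr addbA -IH oddb /=.
case: Hcol => _ H2; have := H2 (sg (iter m sg x)); rewrite permK.
by case: (col _) => /=; case: (col _) => /= <-.
Qed.

End ColorLemmas.

Section OrbitLemmas.
Variables (D : finType) (sg : {perm D}).

Lemma orbit_split x y : fconnect sg x y -> x != y ->
  exists T' R, fingraph.orbit sg x = x :: T' ++ y :: R /\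
               traject sg (sg x) (findex sg x y) = rcons T' y.
Proof.
move=> Hxy nxy.
have Hn : 0 < findex sg x y by rewrite lt0n findex_eq0.
have Hlt := findex_max Hxy.
have Hy := iter_findex Hxy.
move: Hn Hlt Hy; set n := findex sg x y => Hn Hlt Hy.
case: n Hn Hlt Hy => // n' _ Hlt Hy.
have Ho : fingraph.order sg x = n'.+1 + (fingraph.order sg x - n'.+1).-1.+1.
  by rewrite prednK ?subn_gt0 // subnKC // ltnW.
exists (traject sg (sg x) n'), (traject sg (sg y) (fingraph.order sg x - n'.+1).-1).
split; last by rewrite trajectSr -iterSr Hy.
by rewrite /fingraph.orbit {1}Ho trajectD trajectS Hy trajectS.
Qed.

Lemma cross_cases x y p1 p2 T' R :
  fingraph.orbit sg x = x :: T' ++ y :: R -> p1 \in fingraph.orbit sg x -> p2 \in fingraph.orbit sg x ->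
  p1 != x -> p1 != y -> p2 != x -> p2 != y ->
  (p1 \in T') != (p2 \in T') ->
  subseq [:: x; p1; y; p2] (fingraph.orbit sg x) \/ subseq [:: p1; x; p2; y] (fingraph.orbit sg p1).
Proof.
move=> HO m1 m2 n1x n1y n2x n2y.
have inR q : q \in fingraph.orbit sg x -> q != x -> q != y -> q \notin T' -> q \in R.
  rewrite HO inE mem_cat inE => /orP[->//|/orP[->//|/orP[->//|//]]].
case: (boolP (p1 \in T')) => H1; case: (boolP (p2 \in T')) => H2 //= _.
  left; rewrite HO /= eqxx -[[:: p1; y; p2]]/([:: p1] ++ [:: y; p2]).
  by apply: cat_subseq; rewrite ?sub1seq //= eqxx sub1seq inR.
right.
have p1R := inR p1 m1 n1x n1y H1.
case/splitPr: p1R HO => R1 R2 HO.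
have Hc := cycle_orbit (@perm_inj _ sg) x.
have Hu := orbit_uniq sg x.
have HO' : fingraph.orbit sg x = (x :: T' ++ y :: R1) ++ p1 :: R2 by rewrite HO /= -catA.
rewrite (orbitE Hc Hu m1) HO' index_cat.
have Hn1 : p1 \notin x :: T' ++ y :: R1.
  by move: Hu; rewrite HO' cat_uniq => /and3P[_ /hasPn /(_ p1 (mem_head _ _)) ->].
rewrite (negbTE Hn1) [index p1 _]/= eqxx addn0.
rewrite rot_size_cat /= eqxx.
apply: subseq_trans (suffix_subseq R2 _); rewrite /= eqxx.
rewrite -[[:: p2; y]]/([:: p2] ++ [:: y]); apply: cat_subseq; rewrite ?sub1seq //=.
exact: mem_head.
Qed.

End OrbitLemmas.

Lemma sub_in_count' (T : eqType) (a1 a2 : pred T) (s : seq T) :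
  (forall x, x \in s -> a1 x -> a2 x) -> count a1 s <= count a2 s.
Proof.
elim: s => //= x s IH H; apply: leq_add; last by apply: IH => y ys; apply: H; rewrite inE ys orbT.
by case: (boolP (a1 x)) => //= /(H x (mem_head _ _)) ->.
Qed.

Lemma count_pair (T : eqType) (p1 p2 : T) (s : seq T) : uniq s -> p1 != p2 ->
  count (fun d => (d == p1) || (d == p2)) s = (p1 \in s) + (p2 \in s).
Proof.
move=> Us n12; rewrite -!count_uniq_mem //.
rewrite -(count_predUI (pred1 p1) (pred1 p2)) (@eq_count _ (predI _ _) pred0) ?count_pred0 ?addn0.
  by apply: eq_count => d /=.
by move=> d /=; case: eqP => // ->; rewrite (negbTE n12).
Qed.

Section Prefix.
Variables (V E : finType) (tl hd : E -> V).
Let rl := fun x y => hd x == tl y.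
Hypothesis acycH : forall e p, path rl e p -> hd (last e p) != tl e.
Variables (s v : V) (e : E) (r : seq E).
Hypotheses (Hs : tl e = s) (Hp : path rl e r) (Hv : v \in map hd (e :: r)).

Let C := prefix_to hd v (e :: r).

Lemma PF0 f : f \in C -> f \in e :: r.
Proof. by rewrite /C; have [r' [-> _ _ _ Hsub]] := prefix_shape Hp Hv; apply: Hsub. Qed.

Lemma PF1 a b : consec (e :: r) a b -> a \in C -> hd a != v -> b \in C.
Proof.
have [r' [HC Hp' Hl Hc Hsub]] := prefix_shape Hp Hv; rewrite /C HC => Hab aC nav.
have [b' Hb'] : exists b', consec (e :: r') a b'.
  by apply: consec_next => //; apply: (contraNneq _ nav) => ->; rewrite Hl.
have [_ ->] := consec_uniq acycH Hp Hab (Hc _ _ Hb') erefl.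
by case: (consec_mem Hb').
Qed.

Lemma PF2 a b : consec (e :: r) a b -> b \in C -> a \in C.
Proof.
have [r' [HC Hp' Hl Hc Hsub]] := prefix_shape Hp Hv; rewrite /C HC => Hab bC.
have [am _] := consec_mem Hab.
have nas : hd a != s by rewrite -Hs; exact: (noback acycH Hp am).
have [a' Ha'] : exists a', consec (e :: r') a' b.
  apply: consec_prev => //; apply: (contraNneq _ nas) => be.
  by rewrite (consec_link Hp Hab) be Hs.
have E1 : hd a' = hd a by rewrite (consec_link Hp' Ha') (consec_link Hp Hab).
have [<- _] := consec_uniq acycH Hp (Hc _ _ Ha') Hab E1.
by case: (consec_mem Ha').
Qed.

Lemma PF_local (u : V) d : u != v -> u != s -> dvert tl hd d = u -> d.1 \in C ->
  exists ai bi, [/\ consec C ai bi, hd ai = u & d = (ai, false) \/ d = (bi, true)].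
Proof.
have [r' [HC Hp' Hl Hc Hsub]] := prefix_shape Hp Hv; rewrite /C HC => nuv nus.
case: d => f [] Hu fC; rewrite /dvert /= in Hu fC.
  have [a' Ha'] : exists a', consec (e :: r') a' f.
    by apply: consec_prev => //; apply: (contraNneq _ nus) => fe; rewrite -Hu fe Hs.
  exists a', f; split => //; last by right.
  by rewrite (consec_link Hp' Ha').
have [b' Hb'] : exists b', consec (e :: r') f b'.
  by apply: consec_next => //; apply: (contraNneq _ nuv) => fe; rewrite -Hu fe Hl.
by exists f, b'; split => //; left.
Qed.

Lemma PF3 (u : V) d : u != v -> u != s -> dvert tl hd d = u -> d.1 \in C ->
  exists ai bi, [/\ consec C ai bi, hd ai = u &
     forall d', dvert tl hd d' = u ->
        (d'.1 \in C) = (d' == (ai, false)) || (d' == (bi, true))].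
Proof.
move=> nuv nus Hu dC.
have [r' [HC Hp' Hl Hc Hsub]] := prefix_shape Hp Hv.
have [ai [bi [Hab Hai _]]] := PF_local nuv nus Hu dC.
exists ai, bi; split => // d' Hu'.
apply/idP/idP.
  move=> d'C; have [a2 [b2 [Hab2 Ha2 Hor]]] := PF_local nuv nus Hu' d'C.
  move: Hab Hab2; rewrite /C HC => Hab Hab2.
  have [E1 E2] := consec_uniq acycH Hp' Hab2 Hab (etrans Ha2 (esym Hai)).
  by case: Hor => ->; rewrite ?E1 ?E2 eqxx ?orbT.
have [m1 m2] := consec_mem Hab.
by case/orP => /eqP->.
Qed.

End Prefix.

Lemma consec_prefix (V E : finType) (hd : E -> V) v p (a b : E) :
  consec (prefix_to hd v p) a b -> consec p a b.
Proof. exact: consec_take. Qed.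

Lemma acyc_lift (V A E : finType) (tlG hdG : A -> V) (tl hd : E -> V) (phi : E -> A) :
  (forall f, tlG (phi f) = tl f /\ hdG (phi f) = hd f) -> acyclic tlG hdG ->
  forall e p, path (fun x y => hd x == tl y) e p -> hd (last e p) != tl e.
Proof.
move=> Hphi Hac e p Hp.
have Hp' : path (fun x y => hdG x == tlG y) (phi e) (map phi p).
  elim: p e Hp => //= y p IH e /andP[H1 H2]; rewrite IH // andbT.
  by case: (Hphi e) => _ ->; case: (Hphi y) => -> _.
have := Hac _ _ Hp'; rewrite last_map.
by case: (Hphi (last e p)) => _ ->; case: (Hphi e) => -> _.
Qed.

Lemma dvert_orbit (V E : finType) (tl hd : E -> V) (sg : {perm E * bool}) :
  (forall d, dvert tl hd (sg d) = dvert tl hd d) ->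
  forall x q, q \in fingraph.orbit sg x -> dvert tl hd q = dvert tl hd x.
Proof.
move=> Hv x q; rewrite -fconnect_orbit => /iter_findex <-.
by elim: (findex _ _ _) => // m IH; rewrite iterS Hv.
Qed.

Lemma addb_neq c b : c != c (+) b -> b.
Proof. by case: c; case: b. Qed.

Theorem mainTheorem5
  (V A E : finType) (tlG hdG : A -> V) (s : V)
  (tl hd : E -> V) (sg : {perm E * bool}) (phi : E -> A)
  (l : nat) (P : 'I_l -> seq E)
  (i j : 'I_l) (v : V) (col : E * bool -> bool) :
  acyclic tlG hdG ->
  (exists sgG : {perm A * bool}, planar_rot tlG hdG sgG) ->
  arc_split tlG hdG tl hd sg phi ->
  standing_partition tl hd sg s P ->
  i != j ->
  v != s ->
  v \in path_vertices hd s (P i) ->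
  v \in path_vertices hd s (P j) ->
  corner_coloring sg
    (fun f => f \in prefix_to hd v (P i) ++ prefix_to hd v (P j)) col ->
  forall k : 'I_l,
    let inC := fun f => f \in prefix_to hd v (P i) ++ prefix_to hd v (P j) in
    (forall a b, consec (P k) a b -> changes_color inC col a b -> hd a = v) /\
    count (fun ab => changes_color inC col ab.1 ab.2) (zip (P k) (behead (P k))) <= 1.
Proof.
move=> acycG _ [[Hrot _] [Hphi _]] [Hsp Hpart Hnc _ _] nij nvs vi vj Hcol k inC.
have acycH := acyc_lift Hphi acycG.
case: Hrot => Hvert Hconn.
have Hdisj : forall f (i1 i2 : 'I_l), f \in P i1 -> f \in P i2 -> i1 = i2.
  move=> f i1 i2 f1 f2; case: (eqVneq i1 i2) => // n12.
  have c1 : 0 < count_mem f (P i1) by rewrite -has_count has_pred1.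
  have c2 : 0 < count_mem f (P i2) by rewrite -has_count has_pred1.
  have := Hpart f; rewrite (bigD1 i1) // (bigD1 i2) /=; last by rewrite eq_sym n12.
  move=> H; exfalso; move: H c1 c2.
  case: (count_mem f (P i1)) => // n1; case: (count_mem f (P i2)) => // n2.
  by rewrite addSn addnS.
have Hpath : forall i1, exists e r, [/\ P i1 = e :: r, tl e = s &
    path (fun x y => hd x == tl y) e r].
  move=> i1; have := Hsp i1; case: (P i1) => [|e r] //= /andP[/eqP H1 H2].
  by exists e, r.
have Gen : forall idx, idx = i \/ idx = j -> exists e r, [/\ P idx = e :: r, tl e = s,
    path (fun x y => hd x == tl y) e r & v \in map hd (e :: r)].
  move=> idx Hidx; have [e [r [Ep Hs Hp]]] := Hpath idx; exists e, r; split => //.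
  have : v \in path_vertices hd s (P idx) by case: Hidx => ->.
  by rewrite /path_vertices Ep inE (negbTE nvs).
have inCi : forall idx f, idx = i \/ idx = j -> f \in prefix_to hd v (P idx) -> inC f.
  by move=> idx f [] -> Hf; rewrite /inC mem_cat Hf ?orbT.
have inPi : forall idx f, idx = i \/ idx = j -> f \in prefix_to hd v (P idx) -> f \in P idx.
  move=> idx f Hidx; have [e [r [Ep Hs Hp Hv]]] := Gen idx Hidx; rewrite Ep.
  exact: (PF0 Hp Hv).
have core : forall a b, consec (P k) a b -> changes_color inC col a b -> hd a = v.
  move=> a b Hab Hch; case: (eqVneq (hd a) v) => // nav; exfalso.
  have [ek [rk [Ek Hsk Hpk]]] := Hpath k.
  have Hab' := Hab; rewrite Ek in Hab'.
  have [ak bk] := consec_mem Hab'.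
  have akP : a \in P k by rewrite Ek.
  have bkP : b \in P k by rewrite Ek.
  have nus : hd a != s by rewrite -Hsk; exact: (noback acycH Hpk ak).
  have Hl := consec_link Hpk Hab'.
  have black : inC a -> inC b -> False.
    by move=> Ha Hb; move: Hch; rewrite /changes_color /arc_color Ha Hb.
  have notC : forall idx, idx = i \/ idx = j ->
      a \notin prefix_to hd v (P idx) /\ b \notin prefix_to hd v (P idx).
    move=> idx Hidx; have [e [r [Ep Hs Hp Hv]]] := Gen idx Hidx.
    split; apply/negP => HC.
    - have kidx := Hdisj a k idx akP (inPi _ _ Hidx HC).
      have Hab2 : consec (e :: r) a b by rewrite -Ep -kidx.
      move: HC; rewrite Ep => HC.
      have HbC := PF1 acycH Hp Hv Hab2 HC nav.
      by apply: black; apply: (inCi idx); rewrite // Ep.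
    - have kidx := Hdisj b k idx bkP (inPi _ _ Hidx HC).
      have Hab2 : consec (e :: r) a b by rewrite -Ep -kidx.
      move: HC; rewrite Ep => HC.
      have HaC := PF2 acycH Hs Hp Hv Hab2 HC.
      by apply: black; apply: (inCi idx); rewrite // Ep.
  have Ha : inC a = false.
    by rewrite /inC mem_cat (negbTE (notC i (or_introl erefl)).1) (negbTE (notC j (or_intror erefl)).1).
  have Hb : inC b = false.
    by rewrite /inC mem_cat (negbTE (notC i (or_introl erefl)).2) (negbTE (notC j (or_intror erefl)).2).
  have Hcne : col (a, true) != col (b, true).
    by move: Hch; rewrite /changes_color /arc_color Ha Hb; do 2 case: (col _).
  set x := (a, false); set y := (b, true).
  have Hxy : fconnect sg x y by apply: Hconn; rewrite /dvert /= Hl.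
  have nxy : x != y by apply/eqP; case.
  have [T' [R [HO HT]]] := orbit_split Hxy nxy.
  have Hcy := col_iter Hcol x (findex sg x y).
  rewrite (iter_findex Hxy) HT -cats1 count_cat /= -/(inC b) Hb addn0 in Hcy.
  rewrite -/y -/x in Hcy.
  have Hcx : col x = col (a, true) by apply: (col_arc Hcol).
  have Hodd : odd (count (fun d => inC d.1) T').
    by move: Hcne; rewrite -/y Hcy -Hcx [_ + false]addn0; exact: addb_neq.
  have UT : uniq T'.
    by have := orbit_uniq sg x; rewrite HO cons_uniq cat_uniq => /andP[_ /andP[]].
  have TO : forall q, q \in T' -> q \in fingraph.orbit sg x.
    by move=> q qT; rewrite HO inE mem_cat qT orbT.
  have Tu : forall q, q \in T' -> dvert tl hd q = hd a.
    by move=> q /TO /(dvert_orbit Hvert).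
  have even_idx : forall idx, idx = i \/ idx = j ->
      ~~ odd (count (fun d => d.1 \in prefix_to hd v (P idx)) T').
    move=> idx Hidx; have [naC nbC] := notC idx Hidx.
    have [e [r [Ep Hs Hp Hv]]] := Gen idx Hidx; rewrite Ep; rewrite Ep in naC nbC.
    case: (boolP (has (fun d => d.1 \in prefix_to hd v (e :: r)) T')) => Hh; last first.
      by move: Hh; rewrite has_count -eqn0Ngt => /eqP->.
    case/hasP: Hh => d dT dC.
    have [ai [bi [Hc Hai Hchar]]] := PF3 acycH Hs Hp Hv nav nus (Tu d dT) dC.
    have Hc' : consec (e :: r) ai bi := consec_prefix Hc.
    have [aiC biC] := consec_mem Hc.
    have nk : k != idx.
      apply/eqP => kidx.
      have Hc2 : consec (ek :: rk) ai bi by rewrite -Ek kidx Ep.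
      have [E1 _] := consec_uniq acycH Hpk Hab' Hc2 (esym Hai).
      by move: naC; rewrite E1 aiC.
    rewrite (@eq_in_count _ _ (fun d => (d == (ai, false)) || (d == (bi, true)))); last first.
      by move=> q qT; apply: Hchar; apply: Tu.
    rewrite count_pair //; last by apply/eqP; case.
    case: (eqVneq ((ai, false) \in T') ((bi, true) \in T')) => [->|Hne].
      by case: (_ \in _).
    exfalso.
    have m1 : (ai, false) \in fingraph.orbit sg x.
      by rewrite -fconnect_orbit; apply: Hconn; rewrite /dvert /= Hai.
    have m2 : (bi, true) \in fingraph.orbit sg x.
      by rewrite -fconnect_orbit; apply: Hconn; rewrite /dvert /= -(consec_link Hp Hc') Hai.
    have n1x : (ai, false) != x.
      by apply/eqP => -[E1]; move: naC; rewrite -E1 aiC.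
    have n2y : (bi, true) != y.
      by apply/eqP => -[E1]; move: nbC; rewrite -E1 biC.
    have n1y : (ai, false) != y by apply/eqP; case.
    have n2x : (bi, true) != x by apply/eqP; case.
    have Hc3 : consec (P idx) ai bi by rewrite Ep.
    case: (cross_cases HO m1 m2 n1x n1y n2x n2y Hne) => Hs1.
      by apply: (Hnc k idx nk); exists a, b, ai, bi; split => //; left.
    by apply: (Hnc k idx nk); exists a, b, ai, bi; split => //; right.
  have Hsum : count (fun d => inC d.1) T' =
      count (fun d => d.1 \in prefix_to hd v (P i)) T' +
      count (fun d => d.1 \in prefix_to hd v (P j)) T'.
    rewrite -count_predUI (@eq_count _ (predI _ _) pred0) ?count_pred0 ?addn0.
      by apply: eq_count => d; rewrite /= /inC mem_cat.
    move=> d /=; apply/negP => /andP[H1 H2].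
    have := Hdisj _ _ _ (inPi _ _ (or_introl erefl) H1) (inPi _ _ (or_intror erefl) H2).
    by move=> eij; rewrite eij eqxx in nij.
  move: Hodd; rewrite Hsum oddD.
  have := even_idx i (or_introl erefl); have := even_idx j (or_intror erefl).
  by do 2 case: (odd _).
split; first exact: core.
apply: leq_trans (@sub_in_count' _ _ (fun ab => hd ab.1 == v) _ _) _.
  by move=> [a b] Hm Hch; apply/eqP; exact: core a b Hm Hch.
have [ek [rk [Ek _ Hpk]]] := Hpath k; rewrite Ek.
exact: (count_hd acycH v Hpk).
Qed.
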